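(* Let $A$ be an eNTA (with any finite number of clocks) and let $\gamma=q_0\tau_1q_1\cdots\tau_nq_n$ be a reachable path of $A$. For each $1\le i\le n$, the set $T_i$ of times at which $\tau_i$ is taken, over all runs along $\gamma$, is one of the following: a single point $\{n\}$ with $n\in\mathbb N_0$, or an interval (open, closed or half-open) with end-points $m<n$, where $m\in\mathbb N_0$ and $n\in\mathbb N\cup\{\infty\}$. Consequently, the timestamp of the $i$-th event, namely $T_i\times\{a_i\}$ where $a_i$ is the action of $\tau_i$, is a labeled integral point or a labeled interval of this form.
   Context: **Automata.** An eNTA (non-deterministic timed automaton with silent transitions) is a tuple $A=(\mathcal{Q},q_0,\Sigma_\epsilon,\mathcal{C},\mathcal{T})$ with the following components. - $\mathcal{Q}$ is a finite set of locations and $q_0$ is the initial location. - $\Sigma$ is a finite set of observable actions, and $\Sigma_\epsilon=\Sigma\cup\{\epsilon\}$, where $\epsilon$ is silent. - $\mathcal{C}$ is a finite set of clocks. - $\mathcal{T}$ is a finite set of transitions $(q,a,g,\mathcal{C}_{rst},q')$ with $a\in\Sigma_\epsilon$, $\mathcal C_{rst}\subseteq\mathcal C$ the clocks reset, and guard $g$ a finite conjunction of constraints $c\sim n$ with $c\in\mathcal C$, $\sim\in\{<,\le,=,\ge,>\}$ and $n\in\mathbb N_0$. **Runs.** A run is a finite sequence $$(q_0,\mathbf 0)\xrightarrow{d_1}(q_0,\mathbf 0+d_1)\xrightarrow{\tau_1}(q_1,v_1)\xrightarrow{d_2}\cdots\xrightarrow{\tau_k}(q_k,v_k),$$ where $d_i\in\mathbb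 R_{\ge0}$, $\tau_i=(q_{i-1},a_i,g_i,\mathcal C_i,q_i)\in\mathcal T$, $v_0=\mathbf 0$, $v_{i-1}+d_i\models g_i$, and $v_i$ equals $v_{i-1}+d_i$ with the clocks in $\mathcal C_i$ set to $0$. The $i$-th transition is taken at time $t_i=d_1+\dots+d_i$. **Paths.** A path $\gamma=q_0\tau_1q_1\cdots\tau_nq_n$ is a sequence of transitions with $\tau_i$ going from $q_{i-1}$ to $q_i$. A run along $\gamma$ uses exactly the transitions $\tau_1,\dots,\tau_n$ in order, and $\gamma$ is reachable if such a run exists. *)

(* Defs.v *)
From Stdlib Require Import Reals List Arith Bool.
Import ListNotations.
Open Scope R_scope.

(* Clocks, locations and observable actions are encoded by natural-number
   indices; an eNTA declares how many of each it has (finite sets). *)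
Definition clock := nat.
Definition loc := nat.
(* An action in Sigma_eps: [Some a] is the observable action a, [None] is epsilon. *)
Definition action := option nat.

Inductive cmp := CLt | CLe | CEq | CGe | CGt.

Record constr := Constr { c_clock : clock; c_op : cmp; c_bound : nat }.

Definition guard := list constr.

Record transition := Trans {
  t_src : loc; t_act : action; t_guard : guard; t_rst : list clock; t_dst : loc }.

Record eNTA := ENTA {
  n_locs : nat;
  q_init : loc;
  n_acts : nat;
  n_clocks : nat;
  trans : list transition
}.

Definition valuation := clock -> R.

Definition sat_op (op : cmp) (x y : R) : Prop :=
  match op with
  | CLt => x < y | CLe => x <= y | CEq => x = y | CGe => x >= y | CGt => x > y
  end.

Definition sat_constr (v : valuation) (k : constr) : Prop :=
  sat_op (c_op k) (v (c_clock k)) (INR (c_bound k)).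

Definition sat_guard (v : valuation) (g : guard) : Prop :=
  Forall (sat_constr v) g.

Definition delay (v : valuation) (d : R) : valuation := fun c => v c + d.

Definition reset (v : valuation) (rst : list clock) : valuation :=
  fun c => if existsb (Nat.eqb c) rst then 0 else v c.

Definition well_formed (A : eNTA) : Prop :=
  (q_init A < n_locs A)%nat /\
  Forall (fun t =>
    (t_src t < n_locs A)%nat /\ (t_dst t < n_locs A)%nat /\
    (match t_act t with Some a => (a < n_acts A)%nat | None => True end) /\
    Forall (fun k => (c_clock k < n_clocks A)%nat) (t_guard t) /\
    Forall (fun c => (c < n_clocks A)%nat) (t_rst t)) (trans A).

(* gamma = q0 tau_1 q1 ... tau_n qn, represented by the list of transitions
   [tau_1; ...; tau_n] (the locations are determined by the transitions). *)
Fixpoint path_from (A : eNTA) (q : loc) (gamma : list transition) : Prop :=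
  match gamma with
  | [] => True
  | tau :: rest => In tau (trans A) /\ t_src tau = q /\ path_from A (t_dst tau) rest
  end.

Definition is_path (A : eNTA) (gamma : list transition) : Prop :=
  path_from A (q_init A) gamma.

Fixpoint run_from (q : loc) (v : valuation) (gamma : list transition) (ds : list R)
  : Prop :=
  match gamma, ds with
  | [], [] => True
  | tau :: rest, d :: ds' =>
      0 <= d /\ t_src tau = q /\ sat_guard (delay v d) (t_guard tau) /\
      run_from (t_dst tau) (reset (delay v d) (t_rst tau)) rest ds'
  | _, _ => False
  end.

Definition zero_val : valuation := fun _ => 0.

Definition run_along (A : eNTA) (gamma : list transition) (ds : list R) : Prop :=
  run_from (q_init A) zero_val gamma ds.

Definition reachable (A : eNTA) (gamma : list transition) : Prop :=
  exists ds, run_along A gamma ds.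

Definition time_of (ds : list R) (i : nat) : R :=
  fold_right Rplus 0 (firstn i ds).

Definition times (A : eNTA) (gamma : list transition) (i : nat) : R -> Prop :=
  fun t => exists ds, run_along A gamma ds /\ time_of ds i = t.

Definition integral_point (S : R -> Prop) : Prop :=
  exists n : nat, forall t, S t <-> t = INR n.

(* S is an interval with end-points m < n, m in N_0, n in N u {oo}
   (ub = None encodes oo); lc / rc say whether the left / right end-point is
   included (rc is irrelevant when ub = None). *)
Definition integral_interval (S : R -> Prop) : Prop :=
  exists (m : nat) (ub : option nat) (lc rc : bool),
    (match ub with Some n => (m < n)%nat | None => True end) /\
    forall t, S t <->
      ((if lc then INR m <= t else INR m < t) /\
       match ub with
       | Some n => if rc then t <= INR n else t < INR n
       | None => True
       end).

(* Main.v *)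
Require Import Defs.
From Stdlib Require Import Reals List.
From Stdlib Require Import Lra Lia Psatz Classical ZArith.
Import ListNotations.
Open Scope R_scope.

Lemma Int_part_unique z x : IZR z <= x < IZR z + 1 -> Int_part x = z.
Proof.
  unfold Int_part. intros [H1 H2].
  assert (up x = (z+1)%Z). { symmetry; apply tech_up; rewrite plus_IZR; change (IZR 1) with 1; lra. }
  lia.
Qed.

Lemma Int_part_spec x : IZR (Int_part x) <= x < IZR (Int_part x) + 1.
Proof. destruct (base_Int_part x). lra. Qed.

Definition gfun (a b u : R) : R :=
  if Rle_dec u a then u * (b / a) else b + (u - a) * ((1 - b) / (1 - a)).
Definition ffun a b x := IZR (Int_part x) + gfun a b (x - IZR (Int_part x)).

Lemma gfacts a b : 0 < a < 1 -> 0 < b < 1 ->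
  0 < b / a /\ 0 < (1-b)/(1-a) /\ a * (b/a) = b /\ (1-a) * ((1-b)/(1-a)) = 1 - b.
Proof.
  intros Ha Hb. repeat split.
  - apply Rdiv_lt_0_compat; lra.
  - apply Rdiv_lt_0_compat; lra.
  - field; lra.
  - field; lra.
Qed.

Lemma g_lt a b u w : 0 < a < 1 -> 0 < b < 1 -> 0 <= u -> u < w -> w < 1 ->
  gfun a b u < gfun a b w.
Proof.
  intros Ha Hb H1 H2 H3. destruct (gfacts a b Ha Hb) as (P & Q & E1 & E2).
  set (p := b/a) in *. set (q := (1-b)/(1-a)) in *.
  unfold gfun; fold p q.
  destruct (Rle_dec u a); destruct (Rle_dec w a); nra.
Qed.

Lemma g_range a b u : 0 < a < 1 -> 0 < b < 1 -> 0 <= u < 1 ->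
  0 <= gfun a b u < 1.
Proof.
  intros Ha Hb H1. destruct (gfacts a b Ha Hb) as (P & Q & E1 & E2).
  set (p := b/a) in *. set (q := (1-b)/(1-a)) in *.
  unfold gfun; fold p q.
  destruct (Rle_dec u a); nra.
Qed.

Lemma f_mono a b x y : 0 < a < 1 -> 0 < b < 1 -> x < y -> ffun a b x < ffun a b y.
Proof.
  intros Ha Hb H. unfold ffun.
  pose proof (Int_part_spec x) as Hx. pose proof (Int_part_spec y) as Hy.
  set (zx := Int_part x) in *. set (zy := Int_part y) in *.
  destruct (Z.lt_trichotomy zx zy) as [Hl|[He|Hl]].
  - assert (IZR zx + 1 <= IZR zy).
    { replace 1 with (IZR 1) by reflexivity. rewrite <- plus_IZR. apply IZR_le. lia. }
    pose proof (g_range a b (x - IZR zx) Ha Hb ltac:(lra)).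
    pose proof (g_range a b (y - IZR zy) Ha Hb ltac:(lra)). lra.
  - rewrite He in *. pose proof (g_lt a b (x - IZR zy) (y - IZR zy) Ha Hb ltac:(lra) ltac:(lra) ltac:(lra)).
    lra.
  - assert (IZR zy + 1 <= IZR zx).
    { replace 1 with (IZR 1) by reflexivity. rewrite <- plus_IZR. apply IZR_le. lia. }
    lra.
Qed.

Lemma f_weak a b x y : 0 < a < 1 -> 0 < b < 1 -> x <= y -> ffun a b x <= ffun a b y.
Proof.
  intros Ha Hb H. destruct (Req_dec x y) as [->|]; [lra|].
  apply Rlt_le, f_mono; auto; lra.
Qed.

Lemma f_shift a b x n : ffun a b (x + INR n) = ffun a b x + INR n.
Proof.
  assert (E : Int_part (x + INR n) = (Int_part x + Z.of_nat n)%Z).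
  { apply Int_part_unique. rewrite plus_IZR, <- INR_IZR_INZ.
    pose proof (Int_part_spec x). lra. }
  unfold ffun. rewrite E, plus_IZR, <- INR_IZR_INZ.
  replace (x + INR n - (IZR (Int_part x) + INR n)) with (x - IZR (Int_part x)) by ring.
  ring.
Qed.

Lemma sat_pres (f : R -> R) :
  (forall x y, x < y -> f x < f y) -> (forall x y, x <= y -> f x <= f y) ->
  (forall x n, f (x + INR n) = f x + INR n) ->
  forall op x y n, sat_op op (x - y) (INR n) -> sat_op op (f x - f y) (INR n).
Proof.
  intros Hm Hw Hs op x y n. destruct op; simpl; intro H.
  - assert (f x < f (y + INR n)) by (apply Hm; lra). rewrite Hs in H0. lra.
  - assert (f x <= f (y + INR n)) by (apply Hw; lra). rewrite Hs in H0. lra.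
  - assert (x = y + INR n) by lra. subst x. rewrite Hs. ring.
  - assert (f (y + INR n) <= f x) by (apply Hw; lra). rewrite Hs in H0. lra.
  - assert (f (y + INR n) < f x) by (apply Hm; lra). rewrite Hs in H0. lra.
Qed.

Fixpoint transform (f : R -> R) (T : R) (ds : list R) : list R :=
  match ds with
  | [] => []
  | d :: ds' => (f (T + d) - f T) :: transform f (T + d) ds'
  end.

Lemma transform_run (f : R -> R) :
  (forall x y, x < y -> f x < f y) -> (forall x y, x <= y -> f x <= f y) ->
  (forall x n, f (x + INR n) = f x + INR n) ->
  forall gamma q T (Rf : clock -> R) (v v' : valuation) ds,
    (forall c, v c = T - Rf c) -> (forall c, v' c = f T - f (Rf c)) ->
    run_from q v gamma ds -> run_from q v' gamma (transform f T ds).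
Proof.
  intros Hm Hw Hs. induction gamma as [|tau rest IH]; intros q T Rf v v' ds Hv Hv' H;
    destruct ds as [|d ds]; simpl in *; auto.
  destruct H as (Hd & Hsrc & Hg & Hr). split; [|split; [exact Hsrc|split]].
  - assert (f T <= f (T + d)) by (apply Hw; lra). lra.
  - eapply Forall_impl; [|exact Hg]. intros k. unfold sat_constr, delay.
    rewrite Hv, Hv'. intro Hk.
    replace (f T - f (Rf (c_clock k)) + (f (T + d) - f T)) with (f (T + d) - f (Rf (c_clock k))) by ring.
    apply sat_pres; auto.
    replace (T + d - Rf (c_clock k)) with (T - Rf (c_clock k) + d) by ring. exact Hk.
  - eapply (IH (t_dst tau) (T + d)
      (fun c => if existsb (Nat.eqb c) (t_rst tau) then T + d else Rf c)); [| |exact Hr].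
    + intro c. unfold reset, delay. destruct (existsb (Nat.eqb c) (t_rst tau)); [ring|rewrite Hv; ring].
    + intro c. unfold reset, delay. destruct (existsb (Nat.eqb c) (t_rst tau)); [ring|rewrite Hv'; ring].
Qed.

Lemma time_transform (f : R -> R) : forall ds i T,
  fold_right Rplus 0 (firstn i (transform f T ds)) =
  f (T + fold_right Rplus 0 (firstn i ds)) - f T.
Proof.
  induction ds as [|d ds IH]; intros i T; destruct i; simpl;
    try (rewrite Rplus_0_r; ring).
  rewrite IH. replace (T + (d + fold_right Rplus 0 (firstn i ds))) with
    (T + d + fold_right Rplus 0 (firstn i ds)) by ring. ring.
Qed.

Fixpoint comb (l : R) (d1 d2 : list R) : list R :=
  match d1, d2 with
  | x :: r1, y :: r2 => (l * x + (1 - l) * y) :: comb l r1 r2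
  | _, _ => []
  end.

Lemma sat_conv l op x1 x2 y : 0 <= l <= 1 -> sat_op op x1 y -> sat_op op x2 y ->
  sat_op op (l * x1 + (1 - l) * x2) y.
Proof.
  intros Hl. destruct op; simpl; intros H1 H2.
  - destruct (Req_dec l 0) as [->|Hl0]; [lra|].
    assert (l * x1 < l * y) by (apply Rmult_lt_compat_l; lra).
    assert ((1 - l) * x2 <= (1 - l) * y) by (apply Rmult_le_compat_l; lra). lra.
  - assert (l * x1 <= l * y) by (apply Rmult_le_compat_l; lra).
    assert ((1 - l) * x2 <= (1 - l) * y) by (apply Rmult_le_compat_l; lra). lra.
  - rewrite H1, H2. ring.
  - assert (l * x1 >= l * y) by (apply Rmult_ge_compat_l; lra).
    assert ((1 - l) * x2 >= (1 - l) * y) by (apply Rmult_ge_compat_l; lra). lra.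
  - destruct (Req_dec l 0) as [->|Hl0]; [lra|].
    assert (l * y < l * x1) by (apply Rmult_lt_compat_l; lra).
    assert ((1 - l) * y <= (1 - l) * x2) by (apply Rmult_le_compat_l; lra). lra.
Qed.

Lemma run_comb l : 0 <= l <= 1 -> forall gamma q (v1 v2 v : valuation) ds1 ds2,
  (forall c, v c = l * v1 c + (1 - l) * v2 c) ->
  run_from q v1 gamma ds1 -> run_from q v2 gamma ds2 ->
  run_from q v gamma (comb l ds1 ds2).
Proof.
  intros Hl. induction gamma as [|tau rest IH]; intros q v1 v2 v ds1 ds2 Hv H1 H2;
    destruct ds1 as [|d1 ds1]; destruct ds2 as [|d2 ds2]; simpl in *; try tauto.
  destruct H1 as (Hd1 & Hs1 & Hg1 & Hr1). destruct H2 as (Hd2 & Hs2 & Hg2 & Hr2).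
  split; [nra|split; [exact Hs1|split]].
  - unfold sat_guard in *. rewrite Forall_forall in *. intros k Hk. specialize (Hg1 k Hk). specialize (Hg2 k Hk).
    unfold sat_constr, delay in *. rewrite Hv.
    replace (l * v1 (c_clock k) + (1 - l) * v2 (c_clock k) + (l * d1 + (1 - l) * d2))
      with (l * (v1 (c_clock k) + d1) + (1 - l) * (v2 (c_clock k) + d2)) by ring.
    apply sat_conv; auto.
  - eapply IH; [|exact Hr1|exact Hr2].
    intro c. unfold reset, delay. destruct (existsb (Nat.eqb c) (t_rst tau)); [ring|rewrite Hv; ring].
Qed.

Lemma run_length : forall gamma q v ds, run_from q v gamma ds -> length ds = length gamma.
Proof.
  induction gamma as [|tau rest IH]; intros q v ds H; destruct ds; simpl in *; try tauto.
  destruct H as (_ & _ & _ & H). f_equal. eapply IH; eauto.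
Qed.

Lemma time_comb l : forall ds1 ds2 i, length ds1 = length ds2 ->
  time_of (comb l ds1 ds2) i = l * time_of ds1 i + (1 - l) * time_of ds2 i.
Proof.
  unfold time_of.
  induction ds1 as [|x ds1 IH]; intros ds2 i Hlen; destruct ds2 as [|y ds2]; simpl in *;
    try discriminate.
  - destruct i; simpl; ring.
  - destruct i; simpl; [ring|]. rewrite IH by lia. ring.
Qed.

Lemma run_nonneg : forall gamma q v ds, run_from q v gamma ds -> Forall (fun d => 0 <= d) ds.
Proof.
  induction gamma as [|tau rest IH]; intros q v ds H; destruct ds; simpl in *; try tauto; [constructor|].
  destruct H as (Hd & _ & _ & H). constructor; eauto.
Qed.

Lemma time_nonneg : forall ds i, Forall (fun d => 0 <= d) ds -> 0 <= time_of ds i.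
Proof.
  unfold time_of. induction ds as [|d ds IH]; intros i H; destruct i; simpl; try lra.
  inversion H; subst. pose proof (IH i H3). lra.
Qed.

Lemma floor_nat t : 0 <= t -> exists n : nat, INR n <= t < INR n + 1.
Proof.
  intro Ht. pose proof (Int_part_spec t) as [H1 H2].
  assert (Hz : (0 <= Int_part t)%Z).
  { assert (-1 < Int_part t)%Z by (apply lt_IZR; change (IZR (-1)) with (-1); lra). lia. }
  exists (Z.to_nat (Int_part t)). rewrite INR_IZR_INZ, Z2Nat.id by exact Hz. lra.
Qed.

Lemma least (P : nat -> Prop) : (exists n, P n) -> exists n, P n /\ forall m, P m -> (n <= m)%nat.
Proof.
  intros [n Hn]. apply NNPP; intro Hno.
  assert (H : forall k m, (m <= k)%nat -> ~ P m).
  { induction k; intros m Hm HP; apply Hno; exists m; split; auto; intros m' Hm'.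
    - lia.
    - destruct (Nat.le_gt_cases m m'); auto. exfalso. apply (IHk m'); [lia|auto]. }
  exact (H n n (le_n n) Hn).
Qed.

Lemma shape (S : R -> Prop) :
  (exists t, S t) -> (forall t, S t -> 0 <= t) ->
  (forall t1 t2 t, S t1 -> S t2 -> t1 <= t <= t2 -> S t) ->
  (forall (k : nat) t t', INR k < t < INR k + 1 -> INR k < t' < INR k + 1 -> S t -> S t') ->
  integral_point S \/ integral_interval S.
Proof.
  intros [t0 H0] Hnn Hconv Hsat.
  destruct (least (fun n => exists t, S t /\ t < INR n + 1)) as [m [[tm [Htm Htm1]] Hmin]].
  { destruct (floor_nat t0 (Hnn _ H0)) as [n Hn]. exists n, t0. split; [auto|lra]. }
  assert (Hlow : forall t, S t -> INR m <= t).
  { intros t Ht. destruct (floor_nat t (Hnn t Ht)) as [n [Hn1 Hn2]].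
    assert (m <= n)%nat by (apply Hmin; exists t; split; auto). apply le_INR in H. lra. }
  pose proof (Hlow tm Htm) as Htm0.
  assert (Hlc : exists lc : bool, lc = true <-> S (INR m)).
  { destruct (classic (S (INR m))); [exists true | exists false]; split; intro; try tauto; try discriminate. }
  destruct Hlc as [lc Hlc].
  assert (HL : forall t, S t -> if lc then INR m <= t else INR m < t).
  { intros t Ht. pose proof (Hlow t Ht). destruct lc; cbv iota; auto.
    destruct (Req_dec t (INR m)) as [->|]; [|lra]. exfalso. apply Hlc in Ht. discriminate. }
  destruct (classic (exists M, forall t, S t -> t <= M)) as [[M HM]|Hub].
  - destruct (least (fun n => forall t, S t -> t <= INR n)) as [n [Hn Hnmin]].
    { destruct (floor_nat (Rmax M 0) (Rmax_r M 0)) as [k Hk]. exists (Datatypes.S k).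
      intros t Ht. rewrite S_INR. specialize (HM t Ht). pose proof (Rmax_l M 0). lra. }
    assert (Hmn : (m <= n)%nat).
    { apply INR_le. pose proof (Hn tm Htm). lra. }
    destruct (Nat.eq_dec m n) as [<-|Hne].
    + left. exists m. intros t; split.
      * intro Ht. apply Rle_antisym; auto.
      * intros ->. assert (tm = INR m) by (pose proof (Hn tm Htm); lra). subst tm. exact Htm.
    + right. set (p := (n - 1)%nat).
      assert (Hp : INR p + 1 = INR n) by (rewrite <- S_INR; f_equal; unfold p; lia).
      assert (Ht1 : exists t1, S t1 /\ INR p < t1).
      { apply NNPP; intro Hc.
        assert (n <= p)%nat.
        { apply Hnmin. intros t Ht. apply Rnot_lt_le. intro. apply Hc. exists t; auto. }
        unfold p in *; lia. }
      destruct Ht1 as [t1 [Ht1 Ht1p]].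
      pose proof (Hn t1 Ht1) as Ht1n.
      assert (Hin : forall t, INR m < t < INR n -> S t).
      { intros t [Ha Hb].
        destruct (Rle_lt_dec tm t).
        - destruct (Rle_lt_dec t t1).
          + apply (Hconv tm t1); auto.
          + apply (Hsat p t1); [lra|lra|auto].
        - apply (Hsat m tm); [lra|lra|auto]. }
      assert (Hrc : exists rc : bool, rc = true <-> S (INR n)).
      { destruct (classic (S (INR n))); [exists true | exists false]; split; intro; try tauto; try discriminate. }
      destruct Hrc as [rc Hrc].
      exists m, (Some n), lc, rc. split; [lia|]. intros t; split.
      * intros Ht. split; [apply HL; auto|].
        pose proof (Hn t Ht). destruct rc; cbv iota; auto.
        destruct (Req_dec t (INR n)) as [->|]; [|lra]. exfalso. apply Hrc in Ht. discriminate.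
      * intros [Hl Hr].
        destruct (Req_dec t (INR m)) as [->|Hne1].
        { destruct lc; [apply Hlc; auto|cbv iota in Hl; lra]. }
        destruct (Req_dec t (INR n)) as [->|Hne2].
        { destruct rc; [apply Hrc; auto|cbv iota in Hr; lra]. }
        apply Hin. destruct lc, rc; cbv iota in Hl, Hr; lra.
  - assert (Hub' : forall M, exists t, S t /\ M < t).
    { intro M. apply NNPP; intro Hc. apply Hub. exists M. intros t Ht.
      apply Rnot_lt_le. intro. apply Hc. exists t; auto. }
    right. exists m, None, lc, true. split; [exact I|]. intros t; split.
    + intros Ht. split; [apply HL; auto|exact I].
    + intros [Hl _].
      destruct (Req_dec t (INR m)) as [->|Hne1].
      { destruct lc; [apply Hlc; auto|cbv iota in Hl; lra]. }
      assert (Hmt : INR m < t) by (destruct lc; cbv iota in Hl; lra).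
      destruct (Hub' t) as [t1 [Ht1 Ht1t]].
      destruct (Rle_lt_dec tm t).
      * apply (Hconv tm t1); auto; lra.
      * apply (Hsat m tm); [lra|lra|auto].
Qed.

Theorem proposition2 (A : eNTA) (gamma : list transition) :
  well_formed A -> is_path A gamma -> reachable A gamma ->
  forall i : nat, (1 <= i <= length gamma)%nat ->
    integral_point (times A gamma i) \/ integral_interval (times A gamma i).
Proof.
  intros _ _ [ds Hds] i _. apply shape.
  - exists (time_of ds i). exists ds. auto.
  - intros t [ds' [Hr <-]]. apply time_nonneg. eapply run_nonneg; exact Hr.
  - intros t1 t2 t [ds1 [Hr1 E1]] [ds2 [Hr2 E2]] [Ha Hb].
    destruct (Req_dec t1 t2) as [<-|Hne].
    { assert (t = t1) by lra. subst. exists ds1; auto. }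
    set (l := (t2 - t) / (t2 - t1)).
    assert (HlD : l * (t2 - t1) = t2 - t) by (unfold l; field; lra).
    assert (Hl0 : 0 <= l).
    { unfold l. apply Rmult_le_pos; [lra|]. apply Rlt_le, Rinv_0_lt_compat; lra. }
    assert (Hl1 : l <= 1) by nra.
    exists (comb l ds1 ds2). split.
    + eapply run_comb; [lra| |exact Hr1|exact Hr2]. intro c. unfold zero_val. ring.
    + rewrite time_comb.
      * rewrite E1, E2. nra.
      * rewrite (run_length _ _ _ _ Hr1), (run_length _ _ _ _ Hr2). reflexivity.
  - intros k t t' Hk Hk' [ds' [Hr <-]].
    set (a := time_of ds' i - INR k). set (b := t' - INR k).
    assert (Ha : 0 < a < 1) by (unfold a; lra).
    assert (Hb : 0 < b < 1) by (unfold b; lra).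
    exists (transform (ffun a b) 0 ds'). split.
    + eapply (transform_run (ffun a b)); [| | | | |exact Hr].
      * intros; apply f_mono; auto.
      * intros; apply f_weak; auto.
      * apply f_shift.
      * instantiate (1 := fun _ => 0). intro c. unfold zero_val. ring.
      * intro c. unfold zero_val. ring.
    + unfold time_of. rewrite time_transform. fold (time_of ds' i).
      rewrite Rplus_0_l.
      assert (E0 : ffun a b 0 = 0).
      { unfold ffun. rewrite (Int_part_unique 0 0) by (simpl; lra).
        unfold gfun. simpl. destruct (Rle_dec (0 - 0) a); [ring|lra]. }
      assert (Et : Int_part (time_of ds' i) = Z.of_nat k).
      { apply Int_part_unique. rewrite <- INR_IZR_INZ. lra. }
      rewrite E0. unfold ffun. rewrite Et, <- INR_IZR_INZ.
      replace (time_of ds' i - INR k) with a by reflexivity.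
      unfold gfun. destruct (Rle_dec a a); [|lra].
      replace (a * (b / a)) with b by (field; lra). unfold b. ring.
Qed.
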